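(* Let $G$ be a $P_5$-free graph and let $C\subseteq V(G)$ be partitioned into independent sets $C_1,\dots,C_k$ of $G$. Let $D\subseteq C$ be such that $G[D]$ is connected, every vertex of $C$ is in $D$ or has a neighbor in $D$, and $D\cap C_r\neq\emptyset$ for every $r\in\{1,\dots,k\}$. Assume moreover that for every vertex $u\in V(G)\setminus C$ there exists $r\in\{1,\dots,k\}$ such that $u$ has no neighbor in $D\cap C_r$. Let $Y:=V(G)\setminus N[C]$. Then for every connected component $Y'$ of $G[Y]$, the vertex set $V(Y')$ is a module in $G$.
   Context: For $A\subseteq V(G)$, $N(A)$ is the set of vertices outside $A$ with a neighbor in $A$, and $N[A]=A\cup N(A)$. A set $M\subseteq V(G)$ is a module in $G$ if $N(u)\setminus M = N(v)\setminus M$ for all $u,v\in M$. A graph is $P_5$-free if it has no induced path on 5 vertices. *)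

(* Defs.v *)
From mathcomp Require Import all_boot.
Set Implicit Arguments. Unset Strict Implicit. Unset Printing Implicit Defensive.

Section Graphs.
Variable T : finType.
Variable e : rel T.

Definition simple_graph := symmetric e /\ irreflexive e.

Definition nbhd (A : {set T}) : {set T} :=
  [set v | (v \notin A) && [exists u in A, e u v]].
Definition cnbhd (A : {set T}) : {set T} := A :|: nbhd A.

Definition induced_rel (A : {set T}) : rel T :=
  [rel x y | [&& x \in A, y \in A & e x y]].

Definition connected_in (A : {set T}) : Prop :=
  A != set0 /\ forall x y, x \in A -> y \in A -> connect (induced_rel A) x y.

Definition component_of (A Y' : {set T}) : Prop :=
  exists2 y0, y0 \in A & Y' = [set y in A | connect (induced_rel A) y0 y].

Definition independent (A : {set T}) : Prop :=
  forall x y, x \in A -> y \in A -> ~~ e x y.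

Definition is_module (M : {set T}) : Prop :=
  forall u v, u \in M -> v \in M -> forall w, w \notin M -> e u w = e v w.

Definition induced_P5 (v : 'I_5 -> T) : Prop :=
  injective v /\
  forall i j : 'I_5, e (v i) (v j) = ((i.+1 == j :> nat) || (j.+1 == i :> nat)).

Definition P5_free : Prop := forall v : 'I_5 -> T, ~ induced_P5 v.

End Graphs.

(* Main.v *)
Require Import Defs.
From mathcomp Require Import all_boot.
Set Implicit Arguments. Unset Strict Implicit. Unset Printing Implicit Defensive.

Section H.
Variable T : finType.
Variable e : rel T.

Lemma mkP5 v0 v1 v2 v3 v4 : simple_graph e -> P5_free e ->
  e v0 v1 -> e v1 v2 -> e v2 v3 -> e v3 v4 ->
  ~~ e v0 v2 -> ~~ e v0 v3 -> ~~ e v0 v4 -> ~~ e v1 v3 -> ~~ e v1 v4 -> ~~ e v2 v4 ->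
  v0 != v2 -> v0 != v3 -> v0 != v4 -> v1 != v3 -> v1 != v4 -> v2 != v4 -> False.
Proof.
move=> [Hs Hi] HP e01 e12 e23 e34 n02 n03 n04 n13 n14 n24 d02 d03 d04 d13 d14 d24.
have d01 : v0 != v1 by apply/eqP=> E; move: e01; rewrite E Hi.
have d12 : v1 != v2 by apply/eqP=> E; move: e12; rewrite E Hi.
have d23 : v2 != v3 by apply/eqP=> E; move: e23; rewrite E Hi.
have d34 : v3 != v4 by apply/eqP=> E; move: e34; rewrite E Hi.
pose f := fun i : 'I_5 => nth v0 [:: v0; v1; v2; v3; v4] i.
apply: (HP f); split.
- move=> i j H; apply/val_inj; move: H.
  case: i j => [[|[|[|[|[|i]]]]] Hi'] [[|[|[|[|[|j]]]]] Hj] //=;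
  rewrite /f /= => E; move: d01 d02 d03 d04 d12 d13 d14 d23 d24 d34;
  rewrite E ?eqxx //.
- have m02 := negbTE n02; have m03 := negbTE n03; have m04 := negbTE n04.
  have m13 := negbTE n13; have m14 := negbTE n14; have m24 := negbTE n24.
  have r02 : e v2 v0 = false by rewrite Hs.
  have r03 : e v3 v0 = false by rewrite Hs.
  have r04 : e v4 v0 = false by rewrite Hs.
  have r13 : e v3 v1 = false by rewrite Hs.
  have r14 : e v4 v1 = false by rewrite Hs.
  have r24 : e v4 v2 = false by rewrite Hs.
  have f01 : e v1 v0 by rewrite Hs.
  have f12 : e v2 v1 by rewrite Hs.
  have f23 : e v3 v2 by rewrite Hs.
  have f34 : e v4 v3 by rewrite Hs.
  move=> i j.
  case: i j => [[|[|[|[|[|i]]]]] Hi'] [[|[|[|[|[|j]]]]] Hj] //=;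
  rewrite /f /= ?Hi ?e01 ?e12 ?e23 ?e34 ?m02 ?m03 ?m04 ?m13 ?m14 ?m24
    ?r02 ?r03 ?r04 ?r13 ?r14 ?r24 ?f01 ?f12 ?f23 ?f34.
Qed.

Lemma switch (A : {set T}) (P : pred T) x y :
  connect (induced_rel e A) x y -> P x -> ~~ P y ->
  exists a b, [/\ a \in A, b \in A, e a b, P a & ~~ P b].
Proof.
move/connectP=> [p]; elim: p x => [|z p IH] x /=.
  by move=> _ -> ->.
case/andP=> /and3P[xA zA exz] pth Ely Px nPy.
case Pz: (P z); first exact: IH pth Ely Pz nPy.
by exists x, z; rewrite Pz.
Qed.
End H.

Theorem claim4p4 (T : finType) (e : rel T) (k : nat)
    (C D : {set T}) (Cs : 'I_k -> {set T}) :
  simple_graph e ->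
  P5_free e ->
  (* C is partitioned into the independent sets C_1, ..., C_k *)
  C = \bigcup_(r < k) Cs r ->
  (forall r s : 'I_k, r != s -> [disjoint Cs r & Cs s]) ->
  (forall r : 'I_k, independent e (Cs r)) ->
  (* hypotheses on D *)
  D \subset C ->
  connected_in e D ->
  C \subset cnbhd e D ->
  (forall r : 'I_k, D :&: Cs r != set0) ->
  (forall u, u \notin C -> exists r : 'I_k, [forall w in D :&: Cs r, ~~ e u w]) ->
  forall Y' : {set T}, component_of e (~: cnbhd e C) Y' -> is_module e Y'.
Proof.
move=> Hsg HP _ _ _ DC [_ Dconn] CND DCr Hout Y' [y0 y0Y ->].
have [Hs Hi] := Hsg.
set Yc := ~: cnbhd e C.
have symI : connect_sym (induced_rel e Yc).
  apply: sym_connect_sym => a b; rewrite /induced_rel /= Hs; by case: (a \in Yc); case: (b \in Yc).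
have YcP : forall a c, a \in Yc -> c \in C -> (a != c) && ~~ e a c.
  move=> a c; rewrite /Yc /cnbhd /nbhd !inE negb_or negb_and negbK.
  case/andP=> aC H cC; apply/andP; split.
    by apply: contraNneq aC => ->.
  apply/negP=> ea; move: H; rewrite (negbTE aC) /=; apply/negP; rewrite negbK.
  by apply/existsP; exists c; rewrite cC Hs.
have inC : forall d, d \in D -> d \in C by move=> d dD; exact: (subsetP DC).
have key : forall a b w, a \in Yc -> b \in Yc -> e a b -> e a w -> ~~ e b w ->
    w \notin Yc -> False.
  move=> a b w aY bY eab eaw nbw wY.
  have bw : b != w by apply: contraNneq wY => <-.
  have wC : w \notin C.
    by apply/negP=> wC; move: (YcP a w aY wC); rewrite eaw andbF.
  move: wY; rewrite /Yc inE negbK /cnbhd inE (negbTE wC) /= /nbhd inE wC /=.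
  case/existsP=> c /andP[cC ecw].
  have [bc nbc] := andP (YcP b c bY cC).
  have [ac nac] := andP (YcP a c aY cC).
  have [d0 [d0D ewd0]] : exists d0, d0 \in D /\ e w d0.
    move: (subsetP CND c cC); rewrite /cnbhd inE; case/orP=> [cD|].
      by exists c; rewrite Hs.
    rewrite /nbhd inE => /andP[_ /existsP[d /andP[dD edc]]].
    case ewd: (e w d); first by exists d.
    have [bd nbd] := andP (YcP b d bY (inC d dD)).
    have [ad nad] := andP (YcP a d aY (inC d dD)).
    have wd : w != d by apply: contraNneq wC => ->; exact: inC.
    exfalso; apply: (@mkP5 T e b a w c d) => //; rewrite ?ewd // Hs //.
  have [r Hr] := Hout w wC.
  have [d' d'D] := set0Pn _ (DCr r).
  have := switch (P := e w) (Dconn d0 d' d0D (subsetP (subsetIl _ _) d' d'D)) ewd0.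
  case.
    by move: Hr => /forallP/(_ d')/implyP/(_ d'D).
  move=> x [z [xD zD exz ewx nwz]].
  have [bx nbx] := andP (YcP b x bY (inC x xD)).
  have [ax nax] := andP (YcP a x aY (inC x xD)).
  have [bz nbz] := andP (YcP b z bY (inC z zD)).
  have [az naz] := andP (YcP a z aY (inC z zD)).
  have wz : w != z by apply: contraNneq wC => ->; exact: inC.
  by apply: (@mkP5 T e b a w x z) => //; rewrite Hs.
have half : forall u v w, u \in [set y in Yc | connect (induced_rel e Yc) y0 y] ->
    v \in [set y in Yc | connect (induced_rel e Yc) y0 y] ->
    w \notin [set y in Yc | connect (induced_rel e Yc) y0 y] ->
    e u w -> ~~ e v w -> False.
  move=> u v w /setIdP[uY cu] /setIdP[vY cv] wn euw nvw.
  case wY: (w \in Yc).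
    move: wn; rewrite inE wY /= => /negP; apply; apply: connect_trans cu _.
    by apply: connect1; rewrite /induced_rel /= uY wY.
  have cuv : connect (induced_rel e Yc) u v by apply: connect_trans cv; rewrite symI.
  have [a [b [aY bY eab eaw nbw]]] := switch (P := fun t => e t w) cuv euw nvw.
  by apply: (key a b w) => //; rewrite wY.
move=> u v uY vY w wn.
case euw: (e u w); case evw: (e v w) => //.
  by exfalso; apply: (half u v w) => //; rewrite evw.
by exfalso; apply: (half v u w) => //; rewrite euw.
Qed.
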